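(* Let $\mathcal{T}$ be a domain of size $k$, let $\mathbf{x}\in\mathbb{R}^k$ represent a database, let $\mathbf{W}$ be a workload of $q$ linear queries, and let $G=(V,E)$ be a Blowfish policy graph that is a tree. Then there is a matrix $\mathbf{P}_G$ depending only on $G$, with right inverse $\mathbf{P}_G^{-1}$, such that the mapping $f(\mathbf{x},\mathbf{W},G)=(\mathbf{P}_G^{-1}\mathbf{x},\mathbf{W}\mathbf{P}_G)$ is invertible, $\mathbf{W}\mathbf{P}_G\mathbf{P}_G^{-1}\mathbf{x}=\mathbf{W}\mathbf{x}$, and a mechanism $\mathcal{M}$ is an $(\epsilon,G)$-Blowfish private mechanism for answering $\mathbf{W}$ on $\mathbf{x}$ with error $\alpha$ if and only if $\mathcal{M}$ is an $\epsilon$-differentially private mechanism for answering $\mathbf{W}\mathbf{P}_G$ on $\mathbf{P}_G^{-1}\mathbf{x}$ with error $\alpha$.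
   Context: Databases over $\mathcal{T}=\{v_1,\dots,v_k\}$ are histogram vectors $\mathbf{x}\in\mathbb{R}^k$; a workload is a matrix $\mathbf{W}$ whose rows are linear queries with answers $\mathbf{W}\mathbf{x}$. A policy graph is a graph $G=(V,E)$ with $V\subseteq\mathcal{T}\cup\{\bot\}$ for a special vertex $\bot$. Databases $\mathbf{x},\mathbf{x}'$ are Blowfish neighbors under $G$ iff $\mathbf{x}-\mathbf{x}'=\pm(\mathbf{e}_u-\mathbf{e}_v)$ for some edge $(u,v)\in E$ with $u,v\ne\bot$ (one record changes value from $u$ to $v$), or $\mathbf{x}-\mathbf{x}'=\pm\mathbf{e}_u$ for some edge $(u,\bot)\in E$ (one record of value $u$ is added or removed). $\mathcal{M}$ is $(\epsilon,G)$-Blowfish private if $\Pr[\mathcal{M}(\mathbf{x})\in S]\le e^{\epsilon}\Pr[\mathcal{M}(\mathbf{x}')\in S]$ for all output sets $S$ and all Blowfish neighbors $\mathbf{x},\mathbf{x}'$; $\epsilon$-differential privacy (unbounded) is the same condition for all pairs of inputs differing by $\pm$ a single standard unit vector. The error of a mechanism answering workload $\mathbf{W}$ (rows $\mathbf{q}_i$) on $\mathbf{x}$ is $\sum_i\mathbb{E}[(\mathbf{q}_i\mathbf{x}-\mathcal{M}(\mathbf{q}_i,\mathbf{x}))^2]$. *)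

(* Defs.v *)
From HB Require Import structures.
From mathcomp Require Import all_boot all_order all_algebra.
From mathcomp Require Import all_classical all_reals all_analysis.

Set Implicit Arguments.
Unset Strict Implicit.
Unset Printing Implicit Defensive.

Import Order.TTheory GRing.Theory Num.Theory.
Local Open Scope classical_set_scope.
Local Open Scope ring_scope.

(* Domain T = {v_1,...,v_k} is 'I_k; the vertex type of a policy graph is
   option 'I_k, where None plays the role of the special vertex ⊥.         *)
Notation bot := (@None _) (only parsing).

Definition unitv (R : ringType) (n : nat) (u : 'I_n) : 'cV[R]_n := delta_mx u 0.

Definition is_policy_tree (k : nat) (E : rel (option 'I_k)) : Prop :=
  [/\ symmetric E,
      irreflexive E,
      (forall u v, connect E u v)
    & (forall p : seq (option 'I_k), uniq p -> (2 < size p)%N -> ~~ cycle E p)].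

Definition blowfish_neighbors (R : ringType) (k : nat) (E : rel (option 'I_k))
    (x x' : 'cV[R]_k) : Prop :=
  (exists u v : 'I_k, E (Some u) (Some v) /\
     (x - x' = unitv R u - unitv R v \/ x - x' = - (unitv R u - unitv R v)))
  \/
  (exists u : 'I_k, E (Some u) bot /\
     (x - x' = unitv R u \/ x - x' = - unitv R u)).

Definition dp_neighbors (R : ringType) (n : nat) (y y' : 'cV[R]_n) : Prop :=
  exists i : 'I_n, y - y' = unitv R i \/ y - y' = - unitv R i.

(* A mechanism answering a workload of q queries on databases in R^n:
   a map from databases to probability distributions on answer vectors
   (q-tuples of reals, product Borel sigma-algebra). *)
Definition mechanism (R : realType) (n q : nat) :=
  'cV[R]_n -> probability (q.-tuple R) R.

Definition blowfish_private (R : realType) (k q : nat) (E : rel (option 'I_k))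
    (eps : R) (M : mechanism R k q) : Prop :=
  forall x x' : 'cV[R]_k, blowfish_neighbors E x x' ->
  forall S : set (q.-tuple R), measurable S ->
    (M x S <= (expR eps)%:E * M x' S)%E.

Definition dp_private (R : realType) (n q : nat) (eps : R)
    (M : mechanism R n q) : Prop :=
  forall y y' : 'cV[R]_n, dp_neighbors y y' ->
  forall S : set (q.-tuple R), measurable S ->
    (M y S <= (expR eps)%:E * M y' S)%E.

Definition mech_error (R : realType) (n q : nat) (W : 'M[R]_(q, n))
    (M : mechanism R n q) (x : 'cV[R]_n) : \bar R :=
  (\sum_(i < q) \int[M x]_(w in setT) (((W *m x) i 0 - tnth w i) ^+ 2)%:E)%E.

(* Main.v *)
Require Import Defs.
From HB Require Import structures.
From mathcomp Require Import all_boot all_order all_algebra.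
From mathcomp Require Import all_classical all_reals all_analysis.
From mathcomp Require Import zify.

Import Order.TTheory GRing.Theory Num.Theory.
Local Open Scope classical_set_scope.
Local Open Scope ring_scope.
Set Implicit Arguments.
Unset Strict Implicit.

Definition Pr k (par : 'I_k -> option 'I_k) : rel (option 'I_k) :=
  fun a b => match a with Some u => par u == b | None => false end ||
             match b with Some u => par u == a | None => false end.

Arguments Pr {k}.

Lemma eqP_sym_aux (T : eqType) (x y : T) : x != y -> y != x.
Proof. by rewrite eq_sym. Qed.

Lemma tree_paths k (par : 'I_k -> option 'I_k) (d : option 'I_k -> nat)
  (hdec : forall u, (d (par u) < d (Some u))%N)
  (hd0 : forall u, (d None < d (Some u))%N) :
  forall n a b, (d a + d b < n)%N -> a != b ->
  exists s, [/\ uniq (a :: s), path (Pr par) a s & last a s = b].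
Proof.
elim=> [//|n IH] a b hn hab.
case: (leqP (d b) (d a)) => hba.
- case: a hn hab hba => [u|]; last first.
    case: b => [v|] // hn hab hba; by have := hd0 v; rewrite ltnNge hba.
  move=> hn hab hba.
  have hp := hdec u.
  case: (eqVneq (par u) b) => [hpb|hpb].
    exists [:: b]; split => //=; last by rewrite /Pr hpb eqxx.
    by rewrite inE andbT.
  have [|s' [us' ps' ls']] := IH (par u) b _ hpb.
    by move: hn hp; lia.
  case: (boolP (Some u \in par u :: s')) => hin.
    have hin' : Some u \in s'.
      move: hin; rewrite inE => /orP[/eqP e|//].
      by move: hp; rewrite -e ltnn.
    case/splitPr: hin' us' ps' ls' => s1 s2 us' ps' ls'.
    exists s2; split.
    + by move: us'; rewrite /= cat_uniq => /andP[_ /and3P[_ _ ?]].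
    + by move: ps'; rewrite cat_path => /andP[_] /= /andP[_ ->].
    + by rewrite -ls' last_cat.
  exists (par u :: s'); split => //=.
  + by rewrite hin.
  + by rewrite ps' /Pr eqxx.
- case: b hn hab hba => [u'|]; last first.
    case: a => [v|] // hn hab hba; by have := hd0 v; rewrite ltnNge (ltnW hba).
  move=> hn hab hba.
  have hp := hdec u'.
  case: (eqVneq (par u') a) => [hpa|hpa].
    exists [:: Some u']; split => //=; last by rewrite /Pr hpa eqxx orbT.
    by rewrite inE andbT.
  have [|s' [us' ps' ls']] := IH a (par u') _ (@eqP_sym_aux _ _ _ hpa).
    by move: hn hp; lia.
  case: (boolP (Some u' \in a :: s')) => hin.
    have hin' : Some u' \in s'.
      move: hin; rewrite inE => /orP[/eqP e|//].
      by move: hab; rewrite e eqxx.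
    case/splitPr: hin' us' ps' ls' => s1 s2 us' ps' ls'.
    exists (rcons s1 (Some u')); split.
    + apply: subseq_uniq us'; rewrite /= eqxx -cats1; apply: cat_subseq => //.
      by rewrite /= eqxx sub0seq.
    + by move: ps'; rewrite cat_path rcons_path => /andP[-> /= /andP[-> _]].
    + by rewrite last_rcons.
  exists (rcons s' (Some u')); split.
  + by rewrite -rcons_cons rcons_uniq hin.
  + by rewrite rcons_path ps' ls' /Pr eqxx orbT.
  + by rewrite last_rcons.
Qed.

Lemma tree_edge k (E : rel (option 'I_k)) (par : 'I_k -> option 'I_k)
  (d : option 'I_k -> nat)
  (hsym : symmetric E) (hirr : irreflexive E)
  (hacyc : forall p : seq (option 'I_k), uniq p -> (2 < size p)%N -> ~~ cycle E p)
  (hpar : forall u, E (Some u) (par u))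
  (hdec : forall u, (d (par u) < d (Some u))%N)
  (hd0 : forall u, (d None < d (Some u))%N) a b :
  E a b -> Pr par a b.
Proof.
move=> hE; apply/negPn/negP => hn.
have hab : a != b by apply/eqP => e; move: hE; rewrite e hirr.
have [s [us ps ls]] := @tree_paths _ _ _ hdec hd0 _ _ _ (ltnSn (d a + d b)) hab.
have sub : subrel (Pr par) E.
  move=> x y; rewrite /Pr => /orP[].
    by case: x => [u /eqP <-|].
  by case: y => [u /eqP <-|] //; rewrite hsym.
case: s us ps ls => [|x [|y s]] us ps ls.
- by move: hab; rewrite -ls /= eqxx.
- by move: ps hn; rewrite /= -ls andbT => ->.
- have := hacyc (a :: x :: y :: s) us isT; rewrite /= rcons_path.
  have hp := sub_path sub ps.
  have hl : E (last a [:: x, y & s]) a by rewrite ls hsym.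
  move: hp hl; rewrite /= => /and3P[-> -> ->] ->; by [].

Qed.

Definition ev (R : ringType) k (o : option 'I_k) : 'cV[R]_k :=
  match o with Some i => unitv R i | None => 0 end.

Definition Pmx (R : ringType) k (par : 'I_k -> option 'I_k) : 'M[R]_k :=
  \matrix_(i, j) ((i == j)%:R - (par j == Some i)%:R).

Definition prel k (par : 'I_k -> option 'I_k) : rel 'I_k :=
  fun x y => par x == Some y.

Definition Pimx (R : ringType) k (par : 'I_k -> option 'I_k) : 'M[R]_k :=
  \matrix_(u, w) (connect (prel par) w u)%:R.

Lemma connect_prel k (par : 'I_k -> option 'I_k) w u :
  connect (prel par) w u =
  (w == u) || (match par w with Some w' => connect (prel par) w' u | None => false end).
Proof.
apply/idP/idP.
- case/connectP => p pp ->; case: p pp => [|x p] /=; first by rewrite eqxx.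
  case/andP => /eqP -> pp; apply/orP; right; apply/connectP; exists p => //.
- case/orP => [/eqP ->|]; first exact: connect0.
  case e: (par w) => [w'|] // h; apply: connect_trans h.
  by apply: connect1; rewrite /prel e.
Qed.

Lemma connect_prel_dep k (par : 'I_k -> option 'I_k) (d : option 'I_k -> nat)
  (hdec : forall u, (d (par u) < d (Some u))%N) w u :
  connect (prel par) w u -> (d (Some u) <= d (Some w))%N.
Proof.
case/connectP => p pp ->; elim: p w pp => [|x p IH] w //= /andP[/eqP e pp].
apply: leq_trans (IH _ pp) _; apply: ltnW; by have := hdec w; rewrite e.
Qed.

Lemma PimxP (R : ringType) k (par : 'I_k -> option 'I_k) (d : option 'I_k -> nat)
  (hdec : forall u, (d (par u) < d (Some u))%N) :
  Pimx R par *m Pmx R par = 1%:M.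
Proof.
apply/matrixP => u j; rewrite !mxE.
under eq_bigr do rewrite !mxE mulrBr.
rewrite sumrB (bigD1 j) //= eqxx mulr1 big1 ?addr0; last first.
  by move=> w /negbTE ->; rewrite mulr0.
rewrite (connect_prel par j u).
case e: (par j) => [j'|].
- rewrite (bigD1 j') //= eqxx mulr1 big1 ?addr0; last first.
    by move=> w hw; rewrite (inj_eq (@Some_inj _)) eq_sym (negbTE hw) mulr0.
  case: (eqVneq j u) => [e1|hju] /=.
  + subst u.
    have -> : connect (prel par) j' j = false.
      apply/negP => /(@connect_prel_dep _ _ _ hdec); have := hdec j.
      by rewrite -{1}e => h1 h2; have := leq_trans h1 h2; rewrite ltnn.
    by rewrite subr0.
  + by rewrite subrr.
- have -> : \sum_(i < k) (connect (prel par) i u)%:R * (None == Some i)%:R = 0 :> R.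
    by apply: big1 => w _; rewrite mulr0.
  by rewrite subr0 orbF eq_sym.
Qed.

Lemma PcolP (R : ringType) k (par : 'I_k -> option 'I_k) j :
  Pmx R par *m unitv R j = unitv R j - ev R (par j).
Proof.
rewrite /unitv -colE; apply/matrixP => a b; rewrite !mxE (ord1 b) eqxx andbT.
case: (par j) => [j'|] /=; last by rewrite mxE subr0.
rewrite !mxE eqxx andbT.
have -> : (Some j' == Some a) = (a == j') by apply/eqP/eqP => [[]|] ->.
by [].
Qed.

Definition Pn k (E : rel (option 'I_k)) (v : option 'I_k) (n : nat) : bool :=
  [exists t : n.-tuple (option 'I_k), path E v t && (last v t == None)].

Lemma Pn_seq k (E : rel (option 'I_k)) v (p : seq (option 'I_k)) :
  path E v p -> last v p = None -> Pn E v (size p).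
Proof.
move=> pp lp; apply/existsP; exists (in_tuple p) => /=.
by rewrite pp lp eqxx.
Qed.

Lemma exPn k (E : rel (option 'I_k)) (hc : forall u v, connect E u v) v :
  exists n, Pn E v n.
Proof.
have /connectP [p pp lp] := hc v None.
by exists (size p); apply: Pn_seq.
Qed.

Lemma tree_struct k (E : rel (option 'I_k)) (hc : forall u v, connect E u v) :
  exists (par : 'I_k -> option 'I_k) (d : option 'I_k -> nat),
    [/\ forall u, E (Some u) (par u),
        forall u, (d (par u) < d (Some u))%N
      & forall u, (d None < d (Some u))%N].
Proof.
pose d v := ex_minn (exPn hc v).
have dmin v n : Pn E v n -> (d v <= n)%N.
  by rewrite /d; case: (ex_minnP (exPn hc v)) => m _ h; apply: h.
have dP v : Pn E v (d v) by rewrite /d; case: (ex_minnP (exPn hc v)).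
have d0 : d None = 0%N.
  apply/eqP; rewrite -leqn0; apply: dmin.
  by apply: (@Pn_seq _ _ None [::]).
have hex u : exists w, E (Some u) w && (d w < d (Some u))%N.
  have /existsP [[t st] /= /andP [pt lt]] := dP (Some u).
  case: t st pt lt => [|w s] st pt lt; first by move: lt.
  exists w; move: pt => /= /andP [-> pt] /=.
  have := dmin w (size s) (Pn_seq pt (eqP lt)).
  by move: st => /eqP <- /=.
pose par u := odflt None [pick w | E (Some u) w && (d w < d (Some u))%N].
have parP u : E (Some u) (par u) && (d (par u) < d (Some u))%N.
  rewrite /par; case: pickP => [w //|h].
  by have [w hw] := hex u; move: (h w); rewrite hw.
exists par, d; split.
- by move=> u; case/andP: (parP u).
- by move=> u; case/andP: (parP u).
- move=> u; rewrite d0; case/andP: (parP u) => _; exact: leq_ltn_trans.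
Qed.

Theorem theorem4p2 (R : realType) (k : nat) (E : rel (option 'I_k))
    (hG : is_policy_tree E) :
  exists (m : nat) (P : 'M[R]_(k, m)) (Pinv : 'M[R]_(m, k)),
    [/\ P *m Pinv = 1%:M,
        (forall q : nat,
           bijective (fun p : 'cV[R]_k * 'M[R]_(q, k) =>
                        (Pinv *m p.1, p.2 *m P))),
        (forall (q : nat) (W : 'M[R]_(q, k)) (x : 'cV[R]_k),
           (W *m P) *m (Pinv *m x) = W *m x)
      & (forall (q : nat) (W : 'M[R]_(q, k)) (x : 'cV[R]_k) (eps : R)
                (alpha : \bar R) (M : mechanism R m q),
           (blowfish_private E eps (fun x0 => M (Pinv *m x0)) /\
              mech_error W (fun x0 => M (Pinv *m x0)) x = alpha)
           <->
           (dp_private eps M /\ mech_error (W *m P) M (Pinv *m x) = alpha))].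
Proof.
case: hG => hsym hirr hconn hacyc.
have [par [d [hpar hdec hd0]]] := tree_struct hconn.
have hIP : Pimx R par *m Pmx R par = 1%:M := @PimxP R _ _ _ hdec.
have hPI : Pmx R par *m Pimx R par = 1%:M := mulmx1C hIP.
set P := Pmx R par; set Pinv := Pimx R par.
have hWx q (W : 'M[R]_(q, k)) x : (W *m P) *m (Pinv *m x) = W *m x.
  by rewrite mulmxA -(mulmxA W) hPI mulmx1.
have hPx x : P *m (Pinv *m x) = x by rewrite mulmxA hPI mul1mx.
have hxP x : Pinv *m (P *m x) = x by rewrite mulmxA hIP mul1mx.
have hcol j : Pinv *m (unitv R j - ev R (par j)) = unitv R j.
  by rewrite -PcolP hxP.
exists k, P, Pinv; split => //.
- move=> q; exists (fun p : 'cV[R]_k * 'M[R]_(q, k) => (P *m p.1, p.2 *m Pinv)).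
  + by case=> x W /=; rewrite hPx -mulmxA hPI mulmx1.
  + by case=> y V /=; rewrite hxP -mulmxA hIP mulmx1.
- move=> q W x eps alpha M.
  have herr : mech_error (W *m P) M (Pinv *m x) =
              mech_error W (fun x0 => M (Pinv *m x0)) x.
    by rewrite /mech_error hWx.
  rewrite herr; split => -[hpriv ->]; split => //.
  + move=> y y' [i hi] S mS.
    have := hpriv (P *m y) (P *m y') _ S mS; rewrite !hxP; apply.
    have hd : P *m y - P *m y' = P *m (y - y') by rewrite mulmxBr.
    rewrite /blowfish_neighbors hd; case e: (par i) => [j|].
    * left; exists i, j; split; first by have := hpar i; rewrite e.
      by case: hi => ->; [left|right]; rewrite ?mulmxN PcolP e.
    * right; exists i; split; first by have := hpar i; rewrite e.
      by case: hi => ->; [left|right]; rewrite ?mulmxN PcolP e subr0.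
  + move=> x1 x2 hN S mS; apply: hpriv => //.
    have hd : Pinv *m x1 - Pinv *m x2 = Pinv *m (x1 - x2) by rewrite mulmxBr.
    rewrite /dp_neighbors hd.
    case: hN => [[u [v [he hx]]]|[u [he hx]]].
    * have := tree_edge hsym hirr hacyc hpar hdec hd0 he.
      rewrite /Pr => /orP [/eqP epu|/eqP epv].
      - exists u; have hc := hcol u; rewrite epu /= in hc.
        by case: hx => ->; [left|right]; rewrite ?mulmxN hc.
      - exists v; have hc := hcol v; rewrite epv /= in hc.
        have hneg : unitv R u - unitv R v = - (unitv R v - unitv R u).
          by rewrite opprB.
        by case: hx => ->; [right|left]; rewrite hneg ?opprK ?mulmxN hc.
    * have := tree_edge hsym hirr hacyc hpar hdec hd0 he.
      rewrite /Pr orbF => /eqP epu.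
      exists u; have hc := hcol u; rewrite epu /= subr0 in hc.
      by case: hx => ->; [left|right]; rewrite ?mulmxN hc.
Qed.
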